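(* Define for $a\in[1,2]$ and $b>1$ the function $g(a,b)=x\,x_1+y\,y_1$, where $$x=\frac{\sqrt{a^2-1}\,(a^3-8)}{a^6},\quad x_1=(\sqrt{a^2-1}-\sqrt{b^2-1})^3+a^3,\quad y=\frac{\sqrt{b^2-1}\,(b^3-8)}{b^6},\quad y_1=(\sqrt{a^2-1}-\sqrt{b^2-1})^3+b^3.$$ Then $g(a,b)\neq 0$ for all $(a,b)\in[1,2]\times[5/2,\sqrt2(\sqrt3+1)]$. *)

(* Defs.v *)
From Stdlib Require Import Reals.
Open Scope R_scope.

Definition gx (a : R) : R := sqrt (a^2 - 1) * (a^3 - 8) / a^6.
Definition gy (b : R) : R := sqrt (b^2 - 1) * (b^3 - 8) / b^6.
Definition gx1 (a b : R) : R := (sqrt (a^2 - 1) - sqrt (b^2 - 1))^3 + a^3.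
Definition gy1 (a b : R) : R := (sqrt (a^2 - 1) - sqrt (b^2 - 1))^3 + b^3.
Definition g (a b : R) : R := gx a * gx1 a b + gy b * gy1 a b.

(* Main.v *)
Require Import Defs.
From Stdlib Require Import Reals Lra Psatz.
Open Scope R_scope.

Lemma sqrt_bnd (a l h : R) : 0 <= l -> l*l <= a*a - 1 -> a*a - 1 <= h*h -> 0 <= h ->
  l <= sqrt (a^2-1) <= h.
Proof.
  intros H0 H1 H2 H3.
  assert (Ha : 0 <= a^2 - 1) by nra.
  pose proof (sqrt_sqrt _ Ha) as Hs. pose proof (sqrt_pos (a^2-1)) as Hp.
  set (u := sqrt (a^2-1)) in *.
  split; nra.
Qed.

Lemma cube_mono (p q : R) : p <= q -> p^3 <= q^3.
Proof. intros H.
  assert (0 <= q^2 + q*p + p^2) by nra.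
  replace (q^3) with (p^3 + (q-p)*(q^2+q*p+p^2)) by ring.
  assert (0 <= (q-p)*(q^2+q*p+p^2)) by (apply Rmult_le_pos; lra). lra. Qed.

Lemma bilin (xl xh ml mh p x m : R) : xl <= x <= xh -> ml <= m <= mh ->
  p <= xl*ml -> p <= xl*mh -> p <= xh*ml -> p <= xh*mh -> p <= x*m.
Proof.
  intros [] [] ? ? ? ?.
  destruct (Rle_lt_dec 0 m).
  - assert (xl*m <= x*m) by nra.
    destruct (Rle_lt_dec 0 xl); nra.
  - assert (xh*m <= x*m) by nra.
    destruct (Rle_lt_dec 0 xh); nra.
Qed.

Lemma k_mono (p q : R) : 1 <= p -> p <= q -> q <= 2 ->
  (p^3-8)/p^6 <= (q^3-8)/q^6.
Proof.
  intros H1 H2 H3.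
  assert (Hp3 : 1 <= p^3) by nra.
  assert (Hq3 : p^3 <= q^3) by (apply cube_mono; lra).
  assert (Hq8 : q^3 <= 8) by nra.
  set (P := p^3) in *. set (Q := q^3) in *.
  replace (p^6) with (P*P) by (unfold P; ring).
  replace (q^6) with (Q*Q) by (unfold Q; ring).
  set (w1 := /P). set (w2 := /Q).
  assert (E1 : (P - 8)/(P*P) = w1 - 8*w1*w1) by (unfold w1; field; lra).
  assert (E2 : (Q - 8)/(Q*Q) = w2 - 8*w2*w2) by (unfold w2; field; lra).
  rewrite E1, E2.
  assert (w2 <= w1) by (unfold w1, w2; apply Rinv_le_contravar; lra).
  assert (1/8 <= w2) by (unfold w2; replace (1/8) with (/8) by field; apply Rinv_le_contravar; lra).
  assert (w1 <= 1) by (unfold w1; rewrite <- Rinv_1; apply Rinv_le_contravar; lra).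
  nra.
Qed.

Notation V0 := (229/100).
Definition Qf (u : R) : R := 247/1000 + 1113/1000 * u - 501/1000 * u^2 + 7/100 * u^3.

Lemma abox (a0 a1 u0 u1 xl xh p a : R) :
  1 <= a0 -> a0 <= a -> a <= a1 -> a1 <= 2 ->
  0 <= u0 -> u0*u0 <= a0*a0 - 1 -> a1*a1 - 1 <= u1*u1 -> 0 <= u1 ->
  xl * a0^6 <= u1 * (a0^3 - 8) -> u0 * (a1^3 - 8) <= xh * a1^6 ->
  p <= xl*(a0^3 - (V0-u0)^3) -> p <= xl*(a1^3 - (V0-u1)^3) ->
  p <= xh*(a0^3 - (V0-u0)^3) -> p <= xh*(a1^3-(V0-u1)^3) ->
  0 < p + 247/1000 + 1113/1000*u0 - 501/1000*u1^2 + 7/100*u0^3 ->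
  0 < gx a * (a^3 - (V0 - sqrt (a^2-1))^3) + Qf (sqrt (a^2-1)).
Proof.
  intros Ha0 Haa0 Haa1 Ha1 Hu0 Hu0s Hu1s Hu1 Hxl Hxh Hp1 Hp2 Hp3 Hp4 Hfin.
  assert (a0*a0 <= a*a) by (apply Rmult_le_compat; lra).
  assert (a*a <= a1*a1) by (apply Rmult_le_compat; lra).
  assert (Hs : u0*u0 <= a*a - 1) by lra.
  assert (Hs2 : a*a - 1 <= u1*u1) by lra.
  destruct (sqrt_bnd a u0 u1 Hu0 Hs Hs2 Hu1) as [Hul Huh].
  set (u := sqrt (a^2-1)) in *.
  set (k := (a^3-8)/a^6). set (k0 := (a0^3-8)/a0^6). set (k1 := (a1^3-8)/a1^6).
  assert (Ex : gx a = u * k) by (unfold gx, k, u; field; lra).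
  assert (Hk0 : k0 <= k) by (apply k_mono; lra).
  assert (Hk1 : k <= k1) by (apply k_mono; lra).
  assert (Hk : k <= 0).
  { unfold k. assert (a^3 <= 8) by (assert (a^3 <= 2^3) by (apply cube_mono; lra); lra).
    assert (0 < a^6) by (apply pow_lt; lra).
    unfold Rdiv. assert (0 < / a^6) by (apply Rinv_0_lt_compat; lra). nra. }
  assert (E0 : k0 * a0^6 = a0^3 - 8) by (unfold k0; field; lra).
  assert (E1 : k1 * a1^6 = a1^3 - 8) by (unfold k1; field; lra).
  assert (P0 : 0 < a0^6) by (apply pow_lt; lra).
  assert (P1 : 0 < a1^6) by (apply pow_lt; lra).
  assert (Hxl' : xl <= u1 * k0).
  { apply (Rmult_le_reg_r (a0^6)); [lra|]. rewrite Rmult_assoc, E0. lra. }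
  assert (Hxh' : u0 * k1 <= xh).
  { apply (Rmult_le_reg_r (a1^6)); [lra|]. rewrite Rmult_assoc, E1. lra. }
  assert (Hx1 : xl <= gx a).
  { rewrite Ex. assert (0 <= (u1-u)*(-k)) by (apply Rmult_le_pos; lra).
    assert (0 <= u1*(k-k0)) by (apply Rmult_le_pos; lra). nra. }
  assert (Hx2 : gx a <= xh).
  { rewrite Ex. assert (0 <= (u-u0)*(-k)) by (apply Rmult_le_pos; lra).
    assert (0 <= u0*(k1-k)) by (apply Rmult_le_pos; lra). nra. }
  assert (Hm1 : a0^3 - (V0-u0)^3 <= a^3 - (V0-u)^3).
  { assert (a0^3 <= a^3) by (apply cube_mono; lra).
    assert ((V0-u)^3 <= (V0-u0)^3) by (apply cube_mono; lra). lra. }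
  assert (Hm2 : a^3 - (V0-u)^3 <= a1^3 - (V0-u1)^3).
  { assert (a^3 <= a1^3) by (apply cube_mono; lra).
    assert ((V0-u1)^3 <= (V0-u)^3) by (apply cube_mono; lra). lra. }
  assert (Hpm := bilin _ _ _ _ p (gx a) (a^3 - (V0-u)^3) (conj Hx1 Hx2) (conj Hm1 Hm2) Hp1 Hp2 Hp3 Hp4).
  assert (HQ : 247/1000 + 1113/1000*u0 - 501/1000*u1^2 + 7/100*u0^3 <= Qf u).
  { unfold Qf. assert (u0^3 <= u^3) by (apply cube_mono; lra).
    assert (u^2 <= u1^2) by (simpl; rewrite !Rmult_1_r; apply Rmult_le_compat; lra). lra. }
  lra.
Qed.
Notation UM := (17321/10000).

Lemma concave_q (d0 d1 K u U : R) : 0 < U -> 0 <= u <= U -> K <= 0 -> 0 <= d0 ->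
  0 <= d0 + d1*U + K*U^2 -> 0 <= d0 + d1*u + K*u^2.
Proof.
  intros HU [Hu1 Hu2] HK H0 H1.
  assert (0 <= (U-u)*d0) by (apply Rmult_le_pos; lra).
  assert (0 <= u*(d0 + d1*U + K*U^2)) by (apply Rmult_le_pos; lra).
  assert (0 <= (-K)*(u*(U-u))) by (apply Rmult_le_pos; [lra| apply Rmult_le_pos; lra]).
  assert (0 <= U*(d0 + d1*u + K*u^2)) by nra.
  destruct (Rle_lt_dec 0 (d0 + d1*u + K*u^2)); [lra|].
  assert (U*(d0 + d1*u + K*u^2) < 0) by (apply Rmult_pos_neg; lra). lra.
Qed.

Lemma bbox (b0 b1 v0 v1 yl yh Al Bl Ch e K2 b u : R) :
  1 <= b0 -> b0 <= b -> b <= b1 -> 8 < b0^3 ->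
  0 <= v0 -> v0*v0 <= b0*b0-1 -> b1*b1-1 <= v1*v1 -> 0 <= v1 ->
  yl * b1^6 <= v0*(b0^3-8) -> v1*(b1^3-8) <= yh*b0^6 -> 0 <= yl ->
  0 <= b0^3 - v1^3 -> Al <= yl*(b0^3 - v1^3) ->
  Bl <= 3*yl*v0^2 -> 3*yh*v1 <= Ch ->
  0 <= u <= UM ->
  e <= 0 -> e <= (yl - 7/100)*UM -> K2 <= 0 -> K2 <= (501/1000 - Ch) + e ->
  0 <= Al - 247/1000 -> 0 <= (Al - 247/1000) + (Bl - 1113/1000)*UM + K2*UM^2 ->
  Qf u <= gy b * ((u - sqrt (b^2-1))^3 + b^3).
Proof.
  intros Hb0 Hbb0 Hbb1 H8 Hv0 Hv0s Hv1s Hv1 Hyl Hyh Hyl0 Hbv HAl HBl HCh [Hu Hu2] He1 He2 HK1 HK2 Hf1 Hf2.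
  assert (b0*b0 <= b*b) by (apply Rmult_le_compat; lra).
  assert (b*b <= b1*b1) by (apply Rmult_le_compat; lra).
  assert (Hs : v0*v0 <= b*b - 1) by lra.
  assert (Hs2 : b*b - 1 <= v1*v1) by lra.
  destruct (sqrt_bnd b v0 v1 Hv0 Hs Hs2 Hv1) as [Hvl Hvh].
  set (v := sqrt (b^2-1)) in *.
  set (y := gy b).
  assert (P : 0 < b^6) by (apply pow_lt; lra).
  assert (Ey : y * b^6 = v * (b^3-8)) by (unfold y, gy, v; field; lra).
  assert (Hb3 : b0^3 <= b^3) by (apply cube_mono; lra).
  assert (Hb3' : b^3 <= b1^3) by (apply cube_mono; lra).
  assert (Hb6 : b0^6 <= b^6) by (apply pow_incr; lra).
  assert (Hb6' : b^6 <= b1^6) by (apply pow_incr; lra).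
  assert (Hyl' : yl <= y).
  { apply (Rmult_le_reg_r (b^6)); [lra|]. rewrite Ey.
    assert (yl*b^6 <= yl*b1^6) by (apply Rmult_le_compat_l; lra).
    assert (v0*(b0^3-8) <= v*(b^3-8)) by (apply Rmult_le_compat; lra). lra. }
  assert (Hyh0 : 0 <= yh).
  { assert (0 <= v1*(b1^3-8)) by (apply Rmult_le_pos; lra).
    assert (0 < b0^6) by (apply pow_lt; lra).
    destruct (Rle_lt_dec 0 yh); [lra|].
    assert (yh*b0^6 < 0) by (apply Rmult_neg_pos; lra). lra. }
  assert (Hyh' : y <= yh).
  { apply (Rmult_le_reg_r (b^6)); [lra|]. rewrite Ey.
    assert (yh*b0^6 <= yh*b^6) by (apply Rmult_le_compat_l; lra).
    assert (v*(b^3-8) <= v1*(b1^3-8)) by (apply Rmult_le_compat; lra). lra. }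
  assert (E : y * ((u - v)^3 + b^3) = y*(b^3 - v^3) + 3*y*v^2*u - 3*y*v*u^2 + y*u^3) by ring.
  change (gy b) with y. rewrite E.
  assert (Hv3 : v^3 <= v1^3) by (apply cube_mono; lra).
  assert (T1 : Al <= y*(b^3 - v^3)).
  { assert (yl*(b0^3-v1^3) <= y*(b^3-v^3)) by (apply Rmult_le_compat; lra). lra. }
  assert (Hv2 : v0^2 <= v^2) by (simpl; rewrite !Rmult_1_r; apply Rmult_le_compat; lra).
  assert (T2 : Bl*u <= 3*y*v^2*u).
  { apply Rmult_le_compat_r; [lra|].
    assert (yl*v0^2 <= y*v^2) by (apply Rmult_le_compat; [lra| apply pow2_ge_0| lra| lra]). lra. }
  assert (T3 : 3*y*v*u^2 <= Ch*u^2).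
  { apply Rmult_le_compat_r; [apply pow2_ge_0|].
    assert (y*v <= yh*v1) by (apply Rmult_le_compat; lra). lra. }
  assert (T4 : yl*u^3 <= y*u^3) by (apply Rmult_le_compat_r; [apply pow_le; lra| lra]).
  assert (Hu2p : 0 <= u^2) by apply pow2_ge_0.
  assert (T5 : e*u^2 <= (yl - 7/100)*u^3).
  { destruct (Rle_lt_dec 0 (yl - 7/100)).
    - assert (0 <= (yl - 7/100)*u^3) by (apply Rmult_le_pos; [lra| apply pow_le; lra]).
      assert (e*u^2 <= 0) by (assert (0 <= (-e)*u^2) by (apply Rmult_le_pos; lra); lra). lra.
    - replace ((yl - 7/100)*u^3) with (((yl-7/100)*u)*u^2) by ring.
      apply Rmult_le_compat_r; [lra|]. nra. }
  assert (T6 : K2*u^2 <= (501/1000 - Ch + e)*u^2) by (apply Rmult_le_compat_r; lra).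
  assert (T7 := concave_q (Al - 247/1000) (Bl - 1113/1000) K2 u UM ltac:(lra) (conj Hu Hu2) HK1 Hf1 Hf2).
  unfold Qf. lra.
Qed.

Lemma acover (a : R) : 1 <= a <= 2 ->
  0 < gx a * (a^3 - (V0 - sqrt (a^2-1))^3) + Qf (sqrt (a^2-1)).
Proof.
  intros [H1 H2].
  destruct (Rle_lt_dec a (9/8)) as [h0|h0].
  { apply (abox (1) (9/8) (0) (51539/100000) (-3607731/1000000) (1/1000000) (-13/1000000) a); lra. }
  destruct (Rle_lt_dec a (5/4)) as [h1|h1].
  { apply (abox (9/8) (5/4) (515387/1000000) (750001/1000000) (-2432877/1000000) (-163393/200000) (138813/100000) a); lra. }
  destruct (Rle_lt_dec a (11/8)) as [h2|h2].
  { apply (abox (5/4) (11/8) (749999/1000000) (943731/1000000) (-1495959/1000000) (-299667/500000) (-238723/1000000) a); lra. }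
  destruct (Rle_lt_dec a (23/16)) as [h3|h3].
  { apply (abox (11/8) (23/16) (58983/62500) (1032671/1000000) (-103153/125000) (-537931/1000000) (-811013/1000000) a); lra. }
  destruct (Rle_lt_dec a (47/32)) as [h4|h4].
  { apply (abox (23/16) (47/32) (258167/250000) (537873/500000) (-306593/500000) (-99401/200000) (-422521/500000) a); lra. }
  destruct (Rle_lt_dec a (95/64)) as [h5|h5].
  { apply (abox (47/32) (95/64) (1075743/1000000) (1096983/1000000) (-263981/500000) (-59451/125000) (-207571/250000) a); lra. }
  destruct (Rle_lt_dec a (3/2)) as [h6|h6].
  { apply (abox (95/64) (3/2) (54849/50000) (223607/200000) (-494309/1000000) (-111353/250000) (-872607/1000000) a); lra. }
  destruct (Rle_lt_dec a (97/64)) as [h7|h7].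
  { apply (abox (3/2) (97/64) (69877/62500) (1138913/1000000) (-462441/1000000) (-416763/1000000) (-113089/125000) a); lra. }
  destruct (Rle_lt_dec a (49/32)) as [h8|h8].
  { apply (abox (97/64) (49/32) (113891/100000) (9277/8000) (-432271/1000000) (-97399/250000) (-927667/1000000) a); lra. }
  destruct (Rle_lt_dec a (99/64)) as [h9|h9].
  { apply (abox (49/32) (99/64) (579811/500000) (59009/50000) (-100929/250000) (-1137/3125) (-942449/1000000) a); lra. }
  destruct (Rle_lt_dec a (25/16)) as [h10|h10].
  { apply (abox (99/64) (25/16) (1180177/1000000) (1200587/1000000) (-47087/125000) (-339431/1000000) (-474969/500000) a); lra. }
  destruct (Rle_lt_dec a (101/64)) as [h11|h11].
  { apply (abox (25/16) (101/64) (150073/125000) (1220853/1000000) (-351133/1000000) (-63261/200000) (-95093/100000) a); lra. }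
  destruct (Rle_lt_dec a (51/32)) as [h12|h12].
  { apply (abox (101/64) (51/32) (24417/20000) (248197/200000) (-40869/125000) (-147199/500000) (-946141/1000000) a); lra. }
  destruct (Rle_lt_dec a (103/64)) as [h13|h13].
  { apply (abox (51/32) (103/64) (620491/500000) (315247/250000) (-3801/12500) (-273651/1000000) (-468107/500000) a); lra. }
  destruct (Rle_lt_dec a (13/8)) as [h14|h14].
  { apply (abox (103/64) (13/8) (252197/200000) (128087/100000) (-5649/20000) (-50801/200000) (-460871/500000) a); lra. }
  destruct (Rle_lt_dec a (105/64)) as [h15|h15].
  { apply (abox (13/8) (105/64) (1280867/1000000) (325159/250000) (-52399/200000) (-58851/250000) (-180649/200000) a); lra. }
  destruct (Rle_lt_dec a (53/32)) as [h16|h16].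
  { apply (abox (105/64) (53/32) (1300633/1000000) (1320291/1000000) (-242653/1000000) (-54449/250000) (-881199/1000000) a); lra. }
  destruct (Rle_lt_dec a (27/16)) as [h17|h17].
  { apply (abox (53/32) (27/16) (41259/31250) (1359287/1000000) (-227621/1000000) (-182649/1000000) (-455153/500000) a); lra. }
  destruct (Rle_lt_dec a (55/32)) as [h18|h18].
  { apply (abox (27/16) (55/32) (339821/250000) (1397893/1000000) (-193387/1000000) (-154101/1000000) (-168919/200000) a); lra. }
  destruct (Rle_lt_dec a (7/4)) as [h19|h19].
  { apply (abox (55/32) (7/4) (139789/100000) (718071/500000) (-162817/1000000) (-128513/1000000) (-771241/1000000) a); lra. }
  destruct (Rle_lt_dec a (29/16)) as [h20|h20].
  { apply (abox (7/4) (29/16) (1436139/1000000) (60467/40000) (-138977/1000000) (-82861/1000000) (-761991/1000000) a); lra. }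
  destruct (Rle_lt_dec a (15/8)) as [h21|h21].
  { apply (abox (29/16) (15/8) (188959/125000) (793037/500000) (-22879/250000) (-48989/1000000) (-114267/200000) a); lra. }
  apply (abox (15/8) (2) (1586071/1000000) (433013/250000) (-11227/200000) (1/1000000) (-439331/1000000) a); lra.
Qed.

Lemma bcover (b u : R) : 5/2 <= b <= 38638/10000 -> 0 <= u <= UM ->
  Qf u <= gy b * ((u - sqrt (b^2-1))^3 + b^3).
Proof.
  intros [H1 H2] Hu.
  destruct (Rle_lt_dec b (3206819/1280000)) as [h0|h0].
  { apply (bbox (5/2) (3206819/1280000) (1145643/500000) (2297101/1000000) (17663/250000) (36343/500000) (6189/25000) (556383/500000) (500903/1000000) (0) (0) b u); lra. }
  destruct (Rle_lt_dec b (1606819/640000)) as [h1|h1].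
  { apply (bbox (3206819/1280000) (1606819/640000) (1148549/500000) (230291/100000) (17713/250000) (36441/500000) (248821/1000000) (70099/62500) (125881/250000) (0) (-101/40000) b u); lra. }
  destruct (Rle_lt_dec b (3220457/1280000)) as [h2|h2].
  { apply (bbox (1606819/640000) (3220457/1280000) (2302907/1000000) (2308717/1000000) (35523/500000) (73071/1000000) (15629/62500) (22607/20000) (253051/500000) (0) (-5103/1000000) b u); lra. }
  destruct (Rle_lt_dec b (806819/320000)) as [h3|h3].
  { apply (bbox (3220457/1280000) (806819/320000) (1154357/500000) (2314521/1000000) (35617/500000) (36627/500000) (251289/1000000) (142383/125000) (101729/200000) (0) (-3823/500000) b u); lra. }
  destruct (Rle_lt_dec b (646819/256000)) as [h4|h4].
  { apply (bbox (806819/320000) (646819/256000) (1157259/500000) (2320323/1000000) (71417/1000000) (73431/1000000) (252499/1000000) (57387/50000) (31947/62500) (0) (-10153/1000000) b u); lra. }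
  destruct (Rle_lt_dec b (1620457/640000)) as [h5|h5].
  { apply (bbox (646819/256000) (1620457/640000) (7251/3125) (2326123/1000000) (71593/1000000) (36801/500000) (253687/1000000) (144543/125000) (513623/1000000) (0) (-789/62500) b u); lra. }
  destruct (Rle_lt_dec b (3247733/1280000)) as [h6|h6].
  { apply (bbox (1620457/640000) (3247733/1280000) (58153/25000) (2331921/1000000) (17941/250000) (9221/125000) (254859/1000000) (291227/250000) (103213/200000) (0) (-7533/500000) b u); lra. }
  destruct (Rle_lt_dec b (406819/160000)) as [h7|h7].
  { apply (bbox (3247733/1280000) (406819/160000) (1165959/500000) (584429/250000) (71929/1000000) (9241/125000) (128007/500000) (586707/500000) (51847/100000) (0) (-17471/1000000) b u); lra. }
  destruct (Rle_lt_dec b (326819/128000)) as [h8|h8].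
  { apply (bbox (406819/160000) (326819/128000) (2337713/1000000) (23493/10000) (71191/1000000) (75169/1000000) (12357/50000) (583577/500000) (105957/200000) (0) (-14393/500000) b u); lra. }
  destruct (Rle_lt_dec b (820457/320000)) as [h9|h9].
  { apply (bbox (326819/128000) (820457/320000) (2349297/1000000) (590219/250000) (14299/200000) (75451/1000000) (12463/50000) (1183783/1000000) (534393/1000000) (0) (-16697/500000) b u); lra. }
  destruct (Rle_lt_dec b (1647733/640000)) as [h10|h10].
  { apply (bbox (820457/320000) (1647733/640000) (2360873/1000000) (2372443/1000000) (35889/500000) (1183/15625) (50263/200000) (120021/100000) (538869/1000000) (0) (-3787/100000) b u); lra. }
  destruct (Rle_lt_dec b (206819/80000)) as [h11|h11].
  { apply (bbox (1647733/640000) (206819/80000) (59311/25000) (2384001/1000000) (72041/1000000) (75953/1000000) (63327/250000) (1216441/1000000) (271609/500000) (0) (-42219/1000000) b u); lra. }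
  destruct (Rle_lt_dec b (1661371/640000)) as [h12|h12].
  { apply (bbox (206819/80000) (1661371/640000) (1191999/500000) (2395551/1000000) (14457/200000) (38087/500000) (6381/25000) (616241/500000) (273719/500000) (0) (-46439/1000000) b u); lra. }
  destruct (Rle_lt_dec b (166819/64000)) as [h13|h13].
  { apply (bbox (1661371/640000) (166819/64000) (598887/250000) (601773/250000) (7251/100000) (76377/1000000) (257113/1000000) (1248327/1000000) (551541/1000000) (0) (-25271/500000) b u); lra. }
  destruct (Rle_lt_dec b (1675009/640000)) as [h14|h14].
  { apply (bbox (166819/64000) (1675009/640000) (2407089/1000000) (1209313/500000) (36359/500000) (76561/1000000) (258929/1000000) (158/125) (555519/1000000) (0) (-1363/25000) b u); lra. }
  destruct (Rle_lt_dec b (420457/160000)) as [h15|h15].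
  { apply (bbox (1675009/640000) (420457/160000) (2418623/1000000) (2430151/1000000) (18227/250000) (9591/125000) (260687/1000000) (319869/250000) (559383/1000000) (0) (-3649/62500) b u); lra. }
  destruct (Rle_lt_dec b (1688647/640000)) as [h16|h16].
  { apply (bbox (420457/160000) (1688647/640000) (607537/250000) (2441669/1000000) (36541/500000) (76879/1000000) (262391/1000000) (647391/500000) (563141/1000000) (0) (-31071/500000) b u); lra. }
  destruct (Rle_lt_dec b (847733/320000)) as [h17|h17].
  { apply (bbox (1688647/640000) (847733/320000) (1220833/500000) (2453179/1000000) (73239/1000000) (77013/1000000) (132019/500000) (1309893/1000000) (283391/500000) (0) (-65783/1000000) b u); lra. }
  destruct (Rle_lt_dec b (340457/128000)) as [h18|h18].
  { apply (bbox (847733/320000) (340457/128000) (306647/125000) (2464681/1000000) (73381/1000000) (19283/250000) (66409/250000) (264967/200000) (570319/1000000) (0) (-1733/25000) b u); lra. }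
  destruct (Rle_lt_dec b (106819/40000)) as [h19|h19].
  { apply (bbox (340457/128000) (106819/40000) (1232339/500000) (99047/40000) (73509/1000000) (15447/200000) (133593/500000) (66981/50000) (35859/62500) (0) (-14549/200000) b u); lra. }
  destruct (Rle_lt_dec b (1715923/640000)) as [h20|h20].
  { apply (bbox (106819/40000) (1715923/640000) (619043/250000) (1243831/500000) (73621/1000000) (19331/250000) (6717/25000) (338551/250000) (577069/1000000) (0) (-7607/100000) b u); lra. }
  destruct (Rle_lt_dec b (861371/320000)) as [h21|h21].
  { apply (bbox (1715923/640000) (861371/320000) (2487659/1000000) (1249571/500000) (1843/25000) (77399/1000000) (16883/62500) (342159/250000) (116059/200000) (0) (-1239/15625) b u); lra. }
  destruct (Rle_lt_dec b (86819/32000)) as [h22|h22].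
  { apply (bbox (861371/320000) (86819/32000) (2499139/1000000) (15763/6250) (18021/250000) (9921/125000) (31187/125000) (1350643/1000000) (600519/1000000) (0) (-311/3125) b u); lra. }
  destruct (Rle_lt_dec b (875009/320000)) as [h23|h23].
  { apply (bbox (86819/32000) (875009/320000) (2522077/1000000) (2544989/1000000) (36113/500000) (15883/200000) (125923/500000) (68913/50000) (151583/250000) (0) (-105333/1000000) b u); lra. }
  destruct (Rle_lt_dec b (220457/80000)) as [h24|h24].
  { apply (bbox (875009/320000) (220457/80000) (1272493/500000) (2567871/1000000) (36161/500000) (39707/500000) (50807/200000) (1405277/1000000) (9559/15625) (0) (-110777/1000000) b u); lra. }
  destruct (Rle_lt_dec b (888647/320000)) as [h25|h25].
  { apply (bbox (220457/80000) (888647/320000) (641967/250000) (103629/40000) (72373/1000000) (79369/1000000) (256067/1000000) (1431669/1000000) (616871/1000000) (0) (-3621/31250) b u); lra. }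
  destruct (Rle_lt_dec b (447733/160000)) as [h26|h26].
  { apply (bbox (888647/320000) (447733/160000) (1295361/500000) (1306777/500000) (72383/1000000) (79283/1000000) (257947/1000000) (364367/250000) (621633/1000000) (0) (-60317/500000) b u); lra. }
  destruct (Rle_lt_dec b (180457/64000)) as [h27|h27].
  { apply (bbox (447733/160000) (180457/64000) (2613551/1000000) (1318179/500000) (18089/250000) (79159/1000000) (25969/100000) (741357/500000) (156519/250000) (0) (-125077/1000000) b u); lra. }
  destruct (Rle_lt_dec b (56819/20000)) as [h28|h28].
  { apply (bbox (180457/64000) (56819/20000) (527271/200000) (41549/15625) (72293/1000000) (79/1000) (261297/1000000) (1507387/1000000) (630217/1000000) (0) (-64609/500000) b u); lra. }
  destruct (Rle_lt_dec b (915923/320000)) as [h29|h29].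
  { apply (bbox (56819/20000) (915923/320000) (2659133/1000000) (2681891/1000000) (72197/1000000) (9851/125000) (262773/1000000) (1531511/1000000) (126813/200000) (0) (-66533/500000) b u); lra. }
  destruct (Rle_lt_dec b (461371/160000)) as [h30|h30].
  { apply (bbox (915923/320000) (461371/160000) (83809/31250) (2704621/1000000) (7207/100000) (78587/1000000) (4127/15625) (777547/500000) (318823/500000) (0) (-136647/1000000) b u); lra. }
  destruct (Rle_lt_dec b (929561/320000)) as [h31|h31].
  { apply (bbox (461371/160000) (929561/320000) (1352309/500000) (2727329/1000000) (14383/200000) (39169/500000) (265367/1000000) (394541/250000) (320481/500000) (0) (-139963/1000000) b u); lra. }
  destruct (Rle_lt_dec b (46819/16000)) as [h32|h32].
  { apply (bbox (929561/320000) (46819/16000) (1363663/500000) (550003/200000) (35867/500000) (78063/1000000) (53299/200000) (1600737/1000000) (25761/40000) (0) (-71513/500000) b u); lra. }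
  destruct (Rle_lt_dec b (943199/320000)) as [h33|h33].
  { apply (bbox (46819/16000) (943199/320000) (687503/250000) (2772679/1000000) (8941/125000) (15553/200000) (66879/250000) (405701/250000) (323427/500000) (0) (-29171/200000) b u); lra. }
  destruct (Rle_lt_dec b (475009/160000)) as [h34|h34].
  { apply (bbox (943199/320000) (475009/160000) (693169/250000) (2795321/1000000) (71299/1000000) (15489/200000) (53687/200000) (1644381/1000000) (162363/250000) (0) (-148453/1000000) b u); lra. }
  destruct (Rle_lt_dec b (956837/320000)) as [h35|h35].
  { apply (bbox (475009/160000) (956837/320000) (1397659/500000) (1408971/500000) (1421/20000) (15421/200000) (269263/1000000) (1665511/1000000) (325917/500000) (0) (-30167/200000) b u); lra. }
  destruct (Rle_lt_dec b (120457/40000)) as [h36|h36].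
  { apply (bbox (956837/320000) (120457/40000) (2817939/1000000) (88767/31250) (35391/500000) (38373/500000) (269999/1000000) (1686191/1000000) (654003/1000000) (0) (-38251/250000) b u); lra. }
  destruct (Rle_lt_dec b (38819/12800)) as [h37|h37].
  { apply (bbox (120457/40000) (38819/12800) (2840541/1000000) (4581/1600) (14099/200000) (76371/1000000) (54129/200000) (853201/500000) (655981/1000000) (0) (-77491/500000) b u); lra. }
  destruct (Rle_lt_dec b (488647/160000)) as [h38|h38].
  { apply (bbox (38819/12800) (488647/160000) (1431561/500000) (2885687/1000000) (4387/62500) (3799/50000) (271209/1000000) (431547/250000) (131553/200000) (0) (-78383/500000) b u); lra. }
  destruct (Rle_lt_dec b (984113/320000)) as [h39|h39].
  { apply (bbox (488647/160000) (984113/320000) (721421/250000) (2908231/1000000) (559/8000) (9447/125000) (135849/500000) (872791/500000) (659379/1000000) (-109/500000) (-79299/500000) b u); lra. }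
  destruct (Rle_lt_dec b (247733/80000)) as [h40|h40].
  { apply (bbox (984113/320000) (247733/80000) (727057/250000) (586151/200000) (69543/1000000) (37579/500000) (27211/100000) (1764539/1000000) (660811/1000000) (-793/1000000) (-32121/200000) b u); lra. }
  destruct (Rle_lt_dec b (997751/320000)) as [h41|h41].
  { apply (bbox (247733/80000) (997751/320000) (45793/15625) (1476631/500000) (34599/500000) (74729/1000000) (4257/15625) (1783087/1000000) (165521/250000) (-1391/1000000) (-40619/250000) b u); lra. }
  destruct (Rle_lt_dec b (100457/32000)) as [h42|h42].
  { apply (bbox (997751/320000) (100457/32000) (2953259/1000000) (2975751/1000000) (34421/500000) (74289/1000000) (136361/500000) (112579/62500) (331599/500000) (-2007/1000000) (-82103/500000) b u); lra. }
  destruct (Rle_lt_dec b (1011389/320000)) as [h43|h43].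
  { apply (bbox (100457/32000) (1011389/320000) (743937/250000) (2998223/1000000) (2739/40000) (923/12500) (272929/1000000) (1819053/1000000) (83021/125000) (-2643/1000000) (-41453/250000) b u); lra. }
  destruct (Rle_lt_dec b (31819/10000)) as [h44|h44].
  { apply (bbox (1011389/320000) (31819/10000) (149911/50000) (1510339/500000) (34049/500000) (36691/500000) (273073/1000000) (1836463/1000000) (20781/31250) (-103/31250) (-167289/1000000) b u); lra. }
  destruct (Rle_lt_dec b (1025027/320000)) as [h45|h45].
  { apply (bbox (31819/10000) (1025027/320000) (120827/40000) (3043117/1000000) (1058/15625) (72917/1000000) (136579/500000) (463377/250000) (332843/500000) (-793/200000) (-42163/250000) b u); lra. }
  destruct (Rle_lt_dec b (515923/160000)) as [h46|h46].
  { apply (bbox (1025027/320000) (515923/160000) (1521557/500000) (3065539/1000000) (67319/1000000) (18111/250000) (34149/125000) (187023/100000) (666241/1000000) (-929/200000) (-169887/1000000) b u); lra. }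
  destruct (Rle_lt_dec b (207733/64000)) as [h47|h47].
  { apply (bbox (515923/160000) (207733/64000) (47899/15625) (1543973/500000) (33459/500000) (35983/500000) (273169/1000000) (943293/500000) (666683/1000000) (-267/50000) (-10689/62500) b u); lra. }
  destruct (Rle_lt_dec b (261371/80000)) as [h48|h48].
  { apply (bbox (207733/64000) (261371/80000) (3087943/1000000) (3110337/1000000) (66511/1000000) (35741/500000) (273099/1000000) (59457/31250) (667001/1000000) (-1209/200000) (-172047/1000000) b u); lra. }
  destruct (Rle_lt_dec b (1052303/320000)) as [h49|h49].
  { apply (bbox (261371/80000) (1052303/320000) (1555167/500000) (3132713/1000000) (33049/500000) (70993/1000000) (272979/1000000) (191833/100000) (166801/250000) (-169/25000) (-34593/200000) b u); lra. }
  destruct (Rle_lt_dec b (529561/160000)) as [h50|h50].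
  { apply (bbox (1052303/320000) (529561/160000) (313271/100000) (126203/40000) (65679/1000000) (70501/1000000) (272809/1000000) (966847/500000) (667309/1000000) (-3743/500000) (-43449/250000) b u); lra. }
  destruct (Rle_lt_dec b (1065941/320000)) as [h51|h51].
  { apply (bbox (529561/160000) (1065941/320000) (49298/15625) (1588711/500000) (8157/125000) (14001/200000) (272599/1000000) (1948767/1000000) (166827/250000) (-8219/1000000) (-2727/15625) b u); lra. }
  destruct (Rle_lt_dec b (26819/8000)) as [h52|h52].
  { apply (bbox (1065941/320000) (26819/8000) (3177419/1000000) (1599877/500000) (64829/1000000) (34753/500000) (272349/1000000) (981769/500000) (83401/125000) (-4479/500000) (-175167/1000000) b u); lra. }
  destruct (Rle_lt_dec b (1079579/320000)) as [h53|h53].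
  { apply (bbox (26819/8000) (1079579/320000) (3199751/1000000) (3222073/1000000) (64399/1000000) (13801/200000) (13603/50000) (494507/250000) (667019/1000000) (-9703/1000000) (-175723/1000000) b u); lra. }
  destruct (Rle_lt_dec b (543199/160000)) as [h54|h54].
  { apply (bbox (1079579/320000) (543199/160000) (322207/100000) (3244379/1000000) (12793/200000) (34251/500000) (16983/62500) (996101/500000) (666741/1000000) (-2091/200000) (-176197/1000000) b u); lra. }
  destruct (Rle_lt_dec b (1093217/320000)) as [h55|h55].
  { apply (bbox (543199/160000) (1093217/320000) (405547/125000) (3266671/1000000) (63529/1000000) (67997/1000000) (54273/200000) (2006113/1000000) (666373/1000000) (-1121/100000) (-22073/125000) b u); lra. }
  destruct (Rle_lt_dec b (275009/80000)) as [h56|h56].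
  { apply (bbox (1093217/320000) (275009/80000) (816667/250000) (65779/20000) (6309/100000) (16873/250000) (67741/250000) (2019721/1000000) (133187/200000) (-1197/100000) (-88453/500000) b u); lra. }
  destruct (Rle_lt_dec b (221371/64000)) as [h57|h57].
  { apply (bbox (275009/80000) (221371/64000) (3288947/1000000) (206951/62500) (1253/20000) (33493/500000) (135267/500000) (1016543/500000) (665417/1000000) (-3183/250000) (-3543/20000) b u); lra. }
  destruct (Rle_lt_dec b (556837/160000)) as [h58|h58].
  { apply (bbox (221371/64000) (556837/160000) (3311213/1000000) (333347/100000) (62209/1000000) (66479/1000000) (10803/40000) (2046201/1000000) (664819/1000000) (-1687/125000) (-44329/250000) b u); lra. }
  destruct (Rle_lt_dec b (1120493/320000)) as [h59|h59].
  { apply (bbox (556837/160000) (1120493/320000) (3333467/1000000) (3355711/1000000) (61767/1000000) (65973/1000000) (67397/250000) (257383/125000) (4151/6250) (-7131/500000) (-177423/1000000) b u); lra. }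
  destruct (Rle_lt_dec b (70457/20000)) as [h60|h60].
  { apply (bbox (1120493/320000) (70457/20000) (838927/250000) (3377941/1000000) (15331/250000) (65467/1000000) (26907/100000) (1035833/500000) (82929/125000) (-15029/1000000) (-88731/500000) b u); lra. }
  destruct (Rle_lt_dec b (1134131/320000)) as [h61|h61].
  { apply (bbox (70457/20000) (1134131/320000) (1688969/500000) (1700079/500000) (761/12500) (32481/500000) (10741/40000) (1042003/500000) (132529/200000) (-7899/500000) (-44361/250000) b u); lra. }
  destruct (Rle_lt_dec b (22819/6400)) as [h62|h62].
  { apply (bbox (1134131/320000) (22819/6400) (680031/200000) (855591/250000) (60437/1000000) (64457/1000000) (267959/1000000) (419229/200000) (661787/1000000) (-8283/500000) (-88677/500000) b u); lra. }
  destruct (Rle_lt_dec b (1147769/320000)) as [h63|h63].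
  { apply (bbox (22819/6400) (1147769/320000) (3422361/1000000) (3444559/1000000) (59993/1000000) (31977/500000) (66841/250000) (527003/250000) (660881/1000000) (-3467/200000) (-177217/1000000) b u); lra. }
  destruct (Rle_lt_dec b (288647/80000)) as [h64|h64].
  { apply (bbox (1147769/320000) (288647/80000) (861139/250000) (3466743/1000000) (1191/20000) (15863/250000) (266749/1000000) (84787/40000) (659917/1000000) (-9051/500000) (-8851/50000) b u); lra. }
  destruct (Rle_lt_dec b (1161407/320000)) as [h65|h65].
  { apply (bbox (288647/80000) (1161407/320000) (173337/50000) (872229/250000) (14777/250000) (7869/125000) (133057/500000) (2131129/1000000) (82363/125000) (-4717/250000) (-176773/1000000) b u); lra. }
  destruct (Rle_lt_dec b (584113/160000)) as [h66|h66].
  { apply (bbox (1161407/320000) (584113/160000) (3488913/1000000) (1755539/500000) (58667/1000000) (31227/500000) (265461/1000000) (2142373/1000000) (164461/250000) (-19631/1000000) (-44119/250000) b u); lra. }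
  destruct (Rle_lt_dec b (235009/64000)) as [h67|h67].
  { apply (bbox (584113/160000) (235009/64000) (140443/40000) (3533229/1000000) (29113/500000) (30979/500000) (52957/200000) (2153367/1000000) (656737/1000000) (-4079/200000) (-176133/1000000) b u); lra. }
  destruct (Rle_lt_dec b (147733/40000)) as [h68|h68].
  { apply (bbox (235009/64000) (147733/40000) (1766613/500000) (3555371/1000000) (57787/1000000) (7683/125000) (264091/1000000) (2164183/1000000) (655583/1000000) (-5289/250000) (-8787/50000) b u); lra. }
  destruct (Rle_lt_dec b (1188683/320000)) as [h69|h69].
  { apply (bbox (147733/40000) (1188683/320000) (444421/125000) (1788751/500000) (1147/20000) (60973/1000000) (52677/200000) (2174821/1000000) (130879/200000) (-21913/1000000) (-175309/1000000) b u); lra. }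
  destruct (Rle_lt_dec b (597751/160000)) as [h70|h70].
  { apply (bbox (1188683/320000) (597751/160000) (3577499/1000000) (3599623/1000000) (28457/500000) (15121/250000) (262661/1000000) (54631/25000) (16329/25000) (-5667/250000) (-174829/1000000) b u); lra. }
  destruct (Rle_lt_dec b (1202321/320000)) as [h71|h71].
  { apply (bbox (597751/160000) (1202321/320000) (179981/50000) (724347/200000) (56479/1000000) (29999/500000) (65479/250000) (1097719/500000) (162973/250000) (-23421/1000000) (-87157/500000) b u); lra. }
  destruct (Rle_lt_dec b (60457/16000)) as [h72|h72].
  { apply (bbox (1202321/320000) (60457/16000) (905433/250000) (3643837/1000000) (56047/1000000) (29757/500000) (261163/1000000) (1102747/500000) (650579/1000000) (-24169/1000000) (-173749/1000000) b u); lra. }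
  destruct (Rle_lt_dec b (1215959/320000)) as [h73|h73].
  { apply (bbox (60457/16000) (1215959/320000) (1821917/500000) (3665929/1000000) (55617/1000000) (59033/1000000) (130199/500000) (2215367/1000000) (324617/500000) (-12457/500000) (-173149/1000000) b u); lra. }
  destruct (Rle_lt_dec b (611389/160000)) as [h74|h74].
  { apply (bbox (1215959/320000) (611389/160000) (1832963/500000) (3688013/1000000) (13797/250000) (14639/250000) (64903/250000) (445003/200000) (647867/1000000) (-25657/1000000) (-6901/40000) b u); lra. }
  destruct (Rle_lt_dec b (1229597/320000)) as [h75|h75].
  { apply (bbox (611389/160000) (1229597/320000) (368801/100000) (3710087/1000000) (27381/500000) (58081/1000000) (12941/50000) (2234521/1000000) (323229/500000) (-5279/200000) (-85927/500000) b u); lra. }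
  apply (bbox (1229597/320000) (19319/5000) (927521/250000) (466519/125000) (54339/1000000) (5761/100000) (12901/50000) (1121941/500000) (645029/1000000) (-3391/125000) (-85579/500000) b u); lra.
Qed.

Lemma bmax_bound : sqrt 2 * (sqrt 3 + 1) <= 38638/10000.
Proof.
  pose proof (sqrt_sqrt 2 ltac:(lra)) as E2. pose proof (sqrt_sqrt 3 ltac:(lra)) as E3.
  pose proof (sqrt_pos 2). pose proof (sqrt_pos 3).
  assert (sqrt 2 <= 141422/100000) by nra.
  assert (sqrt 3 <= 173206/100000) by nra.
  assert (sqrt 2 * (sqrt 3 + 1) <= 141422/100000 * (173206/100000 + 1)) by (apply Rmult_le_compat; lra).
  lra.
Qed.

Theorem lemma5 : forall a b : R,
  1 <= a <= 2 -> 5 / 2 <= b <= sqrt 2 * (sqrt 3 + 1) -> g a b <> 0.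
Proof.
  intros a b Ha Hb.
  pose proof bmax_bound.
  assert (Hb' : 5/2 <= b <= 38638/10000) by lra.
  destruct (sqrt_bnd a 0 UM ltac:(lra) ltac:(nra) ltac:(nra) ltac:(lra)) as [Hu0 Hu1].
  destruct (sqrt_bnd b V0 4 ltac:(lra) ltac:(nra) ltac:(nra) ltac:(lra)) as [Hv0 Hv1].
  pose proof (acover a Ha) as HA.
  pose proof (bcover b (sqrt (a^2-1)) Hb' (conj Hu0 Hu1)) as HB.
  unfold g, gx1, gy1.
  set (u := sqrt (a^2-1)) in *. set (v := sqrt (b^2-1)) in *.
  assert (Hx : gx a <= 0).
  { unfold gx. fold u. assert (a^3 <= 8) by (assert (a^3 <= 2^3) by (apply cube_mono; lra); lra).
    assert (0 < a^6) by (apply pow_lt; lra).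
    unfold Rdiv. assert (0 < / a^6) by (apply Rinv_0_lt_compat; lra).
    assert (0 <= u * (8 - a^3)) by (apply Rmult_le_pos; lra).
    assert (0 <= u * (8 - a^3) * / a^6) by (apply Rmult_le_pos; lra). nra. }
  assert (Hc : (u - v)^3 + a^3 <= a^3 - (V0 - u)^3).
  { assert ((u-v)^3 <= (u - V0)^3) by (apply cube_mono; lra).
    replace ((u - V0)^3) with (- (V0-u)^3) in * by ring. lra. }
  assert (gx a * (a^3 - (V0 - u)^3) <= gx a * ((u - v)^3 + a^3)) by (apply Rmult_le_compat_neg_l; lra).
  lra.
Qed.
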